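(* Let $\ell \in \mathbb{N}$, and let $\mathcal{P}$ be a hereditary property of ordered graphs. Suppose that for arbitrarily large values of $k$ some ordered graph in $\mathcal{P}$ contains a $(k,\ell)$-structure of Type 3. Then $|\mathcal{P}_n| \geqslant F_{n,\ell+1}$ for every $n \in \mathbb{N}$.
   Context: Ordered graphs of order $n$ have vertex set $[n]$ with the natural order; a hereditary property is a collection of ordered graphs closed under order-preserving isomorphism and induced ordered subgraphs; $\mathcal{P}_n$ is the set of members with vertex set $[n]$. A $(k,\ell)$-structure of Type 3 in $G$ consists of vertices $x_1<z_{1,1}<\dots<z_{1,\ell-1}<y_1<x_2<z_{2,1}<\dots<z_{2,\ell-1}<y_2<x_3<\dots<y_{2k-1}<x_{2k}<z_{2k,1}<\dots<z_{2k,\ell-1}<y_{2k}$ such that for $1\leqslant i<2k$, $x_iy_i\in E(G)$ iff $x_{i+1}y_{i+1}\notin E(G)$. $F_{n,k}$: $F_{n,k}=0$ for $n<0$, $F_{0,k}=1$, $F_{n,k}=F_{n-1,k}+\dots+F_{n-k,k}$ for $n\geqslant1$. *)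

(* Defs.v *)
From mathcomp Require Import all_boot.
Set Implicit Arguments. Unset Strict Implicit. Unset Printing Implicit Defensive.

(* An ordered graph on vertex set [n] = {0,..,n-1} (natural order) is given by
   its edge set, a set of pairs (i,j) with i < j. *)
Definition ograph (n : nat) := {set 'I_n * 'I_n}.

Definition wf_ograph n (G : ograph n) : bool :=
  [forall p in G, (p.1 < p.2)%N].

Definition adjn n (G : ograph n) (u v : nat) : bool :=
  [exists p in G, ((p.1 == u :> nat) && (p.2 == v :> nat))
                  || ((p.1 == v :> nat) && (p.2 == u :> nat))].

(* a property of ordered graphs: for each n, a predicate on graphs on [n]
   (only well-formed graphs are considered). *)
Definition oproperty := forall n : nat, pred (ograph n).

Definition induced n m (G : ograph n) (f : 'I_m -> 'I_n) : ograph m :=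
  [set p : 'I_m * 'I_m | (p.1 < p.2)%N && ((f p.1, f p.2) \in G)].

Definition strictly_increasing n m (f : 'I_m -> 'I_n) : Prop :=
  forall i j : 'I_m, (i < j)%N -> (f i < f j)%N.

(* hereditary: closed under induced ordered subgraphs (closure under
   order-preserving isomorphism is automatic: the only order isomorphism
   [n] -> [n] is the identity). *)
Definition hereditary (P : oproperty) : Prop :=
  forall n m (G : ograph n) (f : 'I_m -> 'I_n),
    wf_ograph G -> P n G -> strictly_increasing f -> P m (induced G f).

(* (k,l)-structure of Type 3: vertices g 0 < g 1 < ... < g (2k*b - 1) where
   each block of b = max(2, l+1) consecutive vertices is
   x_i < z_{i,1} < ... < z_{i,l-1} < y_i, so x_i = g(i*b), y_i = g(i*b+b-1)
   (0-indexed blocks i = 0..2k-1). *)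
Definition blk (l : nat) := maxn 2 l.+1.

Definition type3_structure n (G : ograph n) (k l : nat) : Prop :=
  exists g : nat -> nat,
    (forall j, (j.+1 < 2 * k * blk l)%N -> (g j < g j.+1)%N) /\
    (forall j, (j < 2 * k * blk l)%N -> (g j < n)%N) /\
    (forall i, (i.+1 < 2 * k)%N ->
       adjn G (g (i * blk l)) (g (i * blk l + blk l - 1))
       = ~~ adjn G (g (i.+1 * blk l)) (g (i.+1 * blk l + blk l - 1))).

(* F_{n,k}: F_{n,k} = 0 for n<0, F_{0,k} = 1, F_{n,k} = F_{n-1,k}+...+F_{n-k,k}.
   Flist k n = [:: F_{n,k}; F_{n-1,k}; ...; F_{0,k}]. *)
Fixpoint Flist (k n : nat) : seq nat :=
  match n with
  | 0 => [:: 1]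
  | n'.+1 => let s := Flist k n' in sumn (take k s) :: s
  end.

Definition F (n k : nat) : nat := head 0 (Flist k n).

(* Main.v *)
Require Import Defs.
From mathcomp Require Import all_boot.
From mathcomp Require Import zify.
From Stdlib Require Import IndefiniteDescription Classical.
Set Implicit Arguments. Unset Strict Implicit. Unset Printing Implicit Defensive.

Lemma fchoice (T : Type) (P : nat -> T -> Prop) :
  (forall i, exists x, P i x) -> exists f, forall i, P i (f i).
Proof.
move=> H; exists (fun i => proj1_sig (constructive_indefinite_description _ (H i))).
by move=> i; case: (constructive_indefinite_description _ (H i)).
Qed.

Lemma adjn_sym n (G : ograph n) u v : adjn G u v = adjn G v u.
Proof.
rewrite /adjn; apply/existsP/existsP => -[p /andP[pG h]]; exists p;
by rewrite pG /= orbC.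
Qed.

Lemma adjn_wf n (G : ograph n) (a b : 'I_n) : wf_ograph G -> a < b ->
  adjn G a b = ((a, b) \in G).
Proof.
move=> /forallP wf ab; apply/existsP/idP.
- move=> [[p1 p2] /= /andP[pG /orP[/andP[/eqP e1 /eqP e2]|/andP[/eqP e1 /eqP e2]]]].
  + have -> : a = p1 by apply: val_inj.
    by have -> : b = p2 by apply: val_inj.
  + move: (wf (p1, p2)); rewrite pG /= e1 e2 => h; lia.
- by move=> h; exists (a, b); rewrite h /= !eqxx.
Qed.

Definition Ind N (G : ograph N) n (v : nat -> nat) : ograph n :=
  [set p : 'I_n * 'I_n | (p.1 < p.2) && adjn G (v p.1) (v p.2)].

Definition target (P : oproperty) n := [set G : ograph n | wf_ograph G && P n G].

Lemma Emb (P : oproperty) N (G : ograph N) n (v : nat -> nat) :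
  hereditary P -> wf_ograph G -> P N G ->
  (forall i, i < n -> v i < N) ->
  (forall i j, i < j -> j < n -> v i < v j) ->
  Ind G n v \in target P n.
Proof.
move=> hP wf PG vN vinc.
pose f (i : 'I_n) : 'I_N := Ordinal (vN i (ltn_ord i)).
have finc : strictly_increasing f by move=> i j ij; apply: vinc.
have -> : Ind G n v = induced G f.
  apply/setP => -[a b]; rewrite !inE /=.
  case ab: (a < b) => //=.
  by have /= <- := adjn_wf wf (finc _ _ ab).
rewrite inE; apply/andP; split; last exact: hP.
by apply/forallP => -[a b]; rewrite inE /=; apply/implyP => /andP[].
Qed.

Lemma Ind_mem N (G : ograph N) n v (a b : 'I_n) :
  ((a, b) \in Ind G n v) = (a < b) && adjn G (v a) (v b).
Proof. by rewrite inE. Qed.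

Definition Conf N (G : ograph N) n := exists (p q : nat -> nat) (i0 : nat),
  i0 < n /\ (forall i, i < n -> p i < N /\ q i < N) /\
  (forall i j, i < j -> j < n -> maxn (p i) (q i) < minn (p j) (q j)) /\
  p i0 = q i0 /\
  (forall i, i < n -> i != i0 -> adjn G (p i) (p i0) != adjn G (q i) (p i0)).

Lemma L1 (P : oproperty) N (G : ograph N) n :
  hereditary P -> wf_ograph G -> P N G -> Conf G n -> 2 ^ n.-1 <= #|target P n|.
Proof.
move=> hP wf PG [p [q [i0 [i0n [pqN [ord [pq0 dist]]]]]]].
pose I0 : 'I_n := Ordinal i0n.
pose D := powerset [set~ I0].
pose v (S : {set 'I_n}) i := if i \in [seq val j | j <- enum S] then q i else p i.
pose F S := Ind G n (v S).
have memv (S : {set 'I_n}) (j : 'I_n) : (val j \in [seq val j | j <- enum S]) = (j \in S).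
  by rewrite mem_map ?mem_enum //; apply: val_inj.
have vi0 S : v S i0 = p i0 by rewrite /v; case: ifP.
have key S (j : 'I_n) : j != I0 ->
    adjn G (v S j) (v S i0) =
    (if j \in S then adjn G (q j) (p i0) else adjn G (p j) (p i0)).
  by move=> _; rewrite vi0 /v memv; case: ifP.
have graphdet S1 S2 (j : 'I_n) : F S1 = F S2 -> j != I0 ->
    adjn G (v S1 j) (v S1 i0) = adjn G (v S2 j) (v S2 i0).
  move=> eF jn.
  have: val j != i0 by apply: contra jn => /eqP h; apply/eqP/val_inj.
  rewrite neq_ltn => /orP[ji|ij].
  - have := congr1 (fun H : ograph n => (j, I0) \in H) eF; rewrite /F !Ind_mem /=.
    by rewrite ji.
  - have := congr1 (fun H : ograph n => (I0, j) \in H) eF; rewrite /F !Ind_mem /=.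
    by rewrite ij /= adjn_sym [adjn G (v S2 _) _]adjn_sym.
have Finj : {in D &, injective F}.
  move=> S1 S2; rewrite !inE => s1 s2 eF; apply/setP => j.
  case: (eqVneq j I0) => [->|jn].
  - by apply/idP/idP => h; [move/subsetP: s1 => /(_ _ h)|move/subsetP: s2 => /(_ _ h)];
      rewrite !inE eqxx.
  - have := graphdet _ _ _ eF jn; rewrite !key //.
    have jn' : val j != i0 by apply: contra jn => /eqP h; apply/eqP/val_inj.
    have dj := dist j (ltn_ord j) jn'.
    by case: (j \in S1); case: (j \in S2) => // h; move: dj; rewrite h eqxx.
have FT S : F S \in target P n.
  apply: Emb => //.
  - by move=> i iN; rewrite /v; case: ifP => _; case: (pqN i iN).
  - move=> i j ij jn; have := ord i j ij jn; rewrite /v.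
    by case: ifP => _; case: ifP => _; lia.
have : 2 ^ n.-1 = #|[set F S | S in D]|.
  by rewrite card_in_imset // card_powerset cardsC1 card_ord.
move=> ->; apply: subset_leq_card; apply/subsetP => G' /imsetP [S _ ->].
exact: FT.
Qed.

Lemma map_iotaS (f : nat -> nat) m : [seq f i | i <- iota 1 m] = [seq f i.+1 | i <- iota 0 m].
Proof. by rewrite -(addn0 1) iotaDl -map_comp. Qed.

Lemma Flist_eq k n : Flist k n = [seq F (n - i) k | i <- iota 0 n.+1].
Proof.
elim: n => [|n IH] //.
rewrite [in RHS](_ : iota 0 n.+2 = 0 :: iota 1 n.+1) // map_cons map_iotaS subn0.
have -> : [seq F (n.+1 - i.+1) k | i <- iota 0 n.+1] = Flist k n.
  by rewrite IH; apply: eq_map => i; rewrite subSS.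
by [].
Qed.

Lemma F0 k : F 0 k = 1. Proof. by []. Qed.

Lemma F_rec k n : F n.+1 k = sumn [seq F (n - i) k | i <- iota 0 (minn k n.+1)].
Proof. by rewrite {1}/F /= Flist_eq -map_take take_iota. Qed.

Lemma sumn_iota_le (f : nat -> nat) m m' : m <= m' ->
  sumn [seq f i | i <- iota 0 m] <= sumn [seq f i | i <- iota 0 m'].
Proof.
move=> h; rewrite -(subnKC h) iotaD map_cat sumn_cat; apply: leq_addr.
Qed.

Lemma F_pow k n : F n.+1 k <= 2 ^ n.
Proof.
pose S x := sumn [seq F (x - i) k | i <- iota 0 x.+1].
have FS x : F x.+1 k <= S x.
  by rewrite F_rec; apply: sumn_iota_le; apply: geq_minr.
suff : S n <= 2 ^ n by apply: leq_trans.
elim: n => [|m IH]; first by rewrite /S /= F0.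
have -> : S m.+1 = F m.+1 k + S m.
  rewrite /S [iota 0 m.+2](_ : _ = 0 :: iota 1 m.+1) // map_cons map_iotaS subn0 /=.
  congr (_ + _); congr sumn; apply: eq_map => i; by rewrite subSS.
have := FS m; rewrite expnS; lia.
Qed.

Lemma F_pos k n : 0 < k -> 0 < F n k.
Proof.
move=> k0; elim: n => [|n IH] //.
rewrite F_rec; have -> : minn k n.+1 = (minn k n.+1).-1.+1 by lia.
by rewrite /= subn0; apply: leq_trans IH (leq_addr _ _).
Qed.

Lemma F1 n : F n 1 = 1.
Proof.
elim: n => [|n IH] //; rewrite F_rec (_ : minn 1 n.+1 = 1); last lia.
by rewrite /= subn0 addn0 IH.
Qed.

Definition pp b i t := if t == 0 then 0 else if t == i then b.-1 else t.
Definition partL b r i : seq (nat * nat) := mkseq (fun t => (r, pp b i t)) i.+1.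
Definition partW i : seq bool := mkseq (fun t => t == 0) i.+1.
Arguments partW : simpl never.
Arguments partL : simpl never.

Fixpoint genF b fuel n r : seq (seq bool * seq (nat * nat)) :=
  match n with
  | 0 => [:: ([::], [::])]
  | _.+1 =>
    match fuel with
    | 0 => [::]
    | f.+1 => flatten [seq [seq (partW i ++ x.1, partL b r i ++ x.2)
                           | x <- genF b f (n - i.+1) r.+1] | i <- iota 0 (minn b n)]
    end
  end.

Lemma genF_S b f n r : genF b f.+1 n.+1 r =
  flatten [seq [seq (partW i ++ x.1, partL b r i ++ x.2)
     | x <- genF b f (n.+1 - i.+1) r.+1] | i <- iota 0 (minn b n.+1)].
Proof. by []. Qed.

Definition Good b r n (x : seq bool * seq (nat * nat)) :=
  let w i := nth false x.1 i in
  let bl i := (nth (0,0) x.2 i).1 in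
  let pl i := (nth (0,0) x.2 i).2 in
  [/\ size x.1 = n /\ size x.2 = n,
   (forall i, i < n -> r <= bl i < r + n /\ pl i < b),
   (forall i, i.+1 < n -> if w i.+1 then is_true (bl i < bl i.+1) else bl i = bl i.+1 /\ pl i < pl i.+1),
   (forall i, i < n -> ~~ w i -> exists s e, [/\ s < i <= e, e < n, bl s = bl e, pl s = 0 & pl e = b.-1])
   & (0 < n -> w 0)].

Lemma nthW i w j : nth false (partW i ++ w) j = if j < i.+1 then j == 0 else nth false w (j - i.+1).
Proof. by rewrite nth_cat size_mkseq; case: ifP => // h; rewrite nth_mkseq. Qed.

Lemma nthL b r i L j : nth (0,0) (partL b r i ++ L) j =
   if j < i.+1 then (r, pp b i j) else nth (0,0) L (j - i.+1).
Proof. by rewrite nth_cat size_mkseq; case: ifP => // h; rewrite nth_mkseq. Qed.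

Lemma pp_lt b i j : 2 <= b -> j < i -> i < b -> pp b i j < pp b i j.+1.
Proof. by rewrite /pp => *; do ! case: eqP; lia. Qed.

Lemma pp_lt_b b i j : 2 <= b -> j <= i -> i < b -> pp b i j < b.
Proof. by rewrite /pp => *; do ! case: eqP; lia. Qed.

Lemma genF_good b f n r : 2 <= b -> n <= f -> forall x, x \in genF b f n r -> Good b r n x.
Proof.
move=> b2; elim: f n r => [|f IH] [|n] r // nf x.
- by rewrite inE => /eqP ->; split => //= i; rewrite ltn0.
- by rewrite inE => /eqP ->; split => //= i; rewrite ltn0.
rewrite genF_S.
move/flatten_mapP => [i]; rewrite mem_iota add0n => /andP[_ ib] /mapP [y yin ->].
have ib' : i < b by lia.
have in' : i < n.+1 by lia.
have := IH _ _ (_ : n.+1 - i.+1 <= f) y yin; case; first by lia.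
set m := n.+1 - i.+1 => -[sw sL] bnd cons nst st.
split.
- by rewrite !size_cat /partW /partL !size_mkseq sw sL; split; lia.
- move=> j jn; rewrite nthL; case: ifP => ji /=.
  + by split; [lia| rewrite /pp; case: ifP => _; [lia|case: ifP => _; lia]].
  + have jm : j - i.+1 < m by lia.
    by case: (bnd _ jm) => /andP[h1 h2] h3; split => //; apply/andP; split; lia.
- move=> j jn; rewrite nthW !nthL.
  case: (ltngtP j.+1 i.+1) => ji.
  + rewrite /=; split => //.
    by apply: pp_lt; lia.
  + have jm : (j - i.+1).+1 < m by lia.
    have := cons _ jm.
    by rewrite (_ : (j - i.+1).+1 = j.+1 - i.+1) //; lia.
  + move: ji => [ji]; subst j; rewrite subnn /=.
    have m0 : 0 < m by lia.
    rewrite (st m0); have [/andP[h1 h2] _] := bnd 0 m0; lia.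
- move=> j jn; rewrite nthW; case: ifP => ji.
  + move=> /eqP j0; exists 0, i; rewrite !nthL ltn0Sn ltnSn /=.
    split; [lia | lia | by [] | by [] | rewrite /pp; do ! case: eqP; lia].
  + move=> nw; have jm : j - i.+1 < m by lia.
    have [s [e [h1 h2 h3 h4 h5]]] := nst _ jm nw.
    exists (s + i.+1), (e + i.+1); rewrite !nthL !ifN; try lia.
    by rewrite !addnK; split => //; lia.
- by move=> _; rewrite nthW.
Qed.

Lemma genF_size b f n r : 0 < b -> n <= f -> size (genF b f n r) = F n b.
Proof.
move=> b0; elim: f n r => [|f IH] [|n] r // nf.
rewrite genF_S size_flatten /shape -map_comp F_rec.
congr sumn; apply/eq_in_map => i; rewrite mem_iota add0n => /andP[_ ib] /=.
rewrite size_map IH ?subSS //; lia.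
Qed.

Lemma cat_injl (T : Type) (s : seq T) : injective (cat s).
Proof. by elim: s => //= a s IH s1 s2 [/IH]. Qed.

Lemma uniq_flatten (T : eqType) (I : seq nat) (Fs : nat -> seq T) : uniq I ->
  (forall i, i \in I -> uniq (Fs i)) ->
  (forall i j x, i \in I -> j \in I -> i != j -> x \in Fs i -> x \notin Fs j) ->
  uniq (flatten (map Fs I)).
Proof.
elim: I => //= i I IH /andP[iI uI] u d.
rewrite cat_uniq u ?inE ?eqxx //= IH //; last first.
- by move=> j k x jI kI; apply: d; rewrite inE ?jI ?kI orbT.
- by move=> j jI; apply: u; rewrite inE jI orbT.
rewrite andbT; apply/hasPn => x /flatten_mapP [j jI xj].
have ji : j != i by apply: contra iI => /eqP <-.
have jI' : j \in i :: I by rewrite inE jI orbT.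
exact: (d j i x jI' (mem_head _ _) ji xj).
Qed.

Lemma genF_uniq b f n r : 2 <= b -> n <= f -> uniq (map fst (genF b f n r)).
Proof.
move=> b2; elim: f n r => [|f IH] [|n] r // nf.
rewrite genF_S map_flatten -map_comp.
set Fs := (fun i => _).
apply: uniq_flatten.
- exact: iota_uniq.
- move=> i; rewrite mem_iota add0n => /andP[_ ib].
  rewrite /Fs /comp -map_comp (eq_map (g := cat (partW i) \o fst)) //.
  by rewrite map_comp map_inj_uniq ?IH //; [lia | apply: cat_injl].
- have key i j x : i \in iota 0 (minn b n.+1) -> j \in iota 0 (minn b n.+1) ->
      i < j -> x \in (map fst \o Fs) i -> x \notin (map fst \o Fs) j.
    rewrite !mem_iota !add0n => /andP[_ ib] /andP[_ jb] ij.
    rewrite /Fs /comp -!map_comp => /mapP [y yin ->]; apply/negP => /mapP [z zin].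
    rewrite /comp /=.
    move=> /(congr1 (fun s => nth false s i.+1)); rewrite !nthW ltnn ltnS ij /=.
    have := genF_good b2 (_ : n.+1 - i.+1 <= f) yin; case; first lia.
    move=> [sw _] _ _ _ st; rewrite subnn st //; lia.
  move=> i j x iI jI; rewrite neq_ltn => /orP[ij|ji]; first exact: key.
  move=> xi; apply/negP => xj; move: (key _ _ _ jI iI ji xj); by rewrite xi.
Qed.

Lemma inc_succ (f : nat -> nat) n : (forall j, j.+1 < n -> f j < f j.+1) ->
  forall u v, u < v -> v < n -> f u < f v.
Proof.
move=> H u v uv; rewrite -(subnKC uv); elim: (v - u.+1) => [|d IH] vn.
- by rewrite addn0; apply: H; lia.
- rewrite addnS; apply: (ltn_trans (IH _)); [lia | apply: H; lia].
Qed.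

Lemma nondec_succ (f : nat -> nat) n : (forall j, j.+1 < n -> f j <= f j.+1) ->
  forall u v, u <= v -> v < n -> f u <= f v.
Proof.
move=> H u v uv; rewrite -(subnKC uv); elim: (v - u) => [|d IH] vn.
- by rewrite addn0.
- rewrite addnS; apply: (leq_trans (IH _)); [lia | apply: H; lia].
Qed.

Lemma L2 (P : oproperty) N (G : ograph N) n b (h : nat -> nat -> nat) (c : bool) :
 hereditary P -> wf_ograph G -> P N G -> 2 <= b ->
 (forall r p, r < n -> p < b -> h r p < N) ->
 (forall r p p', r < n -> p < p' -> p' < b -> h r p < h r p') ->
 (forall r r' p p', r < r' -> r' < n -> p < b -> p' < b -> h r p < h r' p') ->
 (forall r r' p p', r < r' -> r' < n -> p < b -> p' < b -> adjn G (h r p) (h r' p') = c) ->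
 (forall r, r < n -> adjn G (h r 0) (h r b.-1) != c) ->
 F n b <= #|target P n|.
Proof.
move=> hP wf PG b2 C1 C2 C3 C4 C5.
pose X := genF b n n 0.
pose vx (x : seq bool * seq (nat * nat)) i := h (nth (0,0) x.2 i).1 (nth (0,0) x.2 i).2.
pose Fm x := Ind G n (vx x).
pose Dec (H : ograph n) : seq bool :=
  [seq [forall u : 'I_n, forall v : 'I_n, ((u < i) && (i <= v)) ==> (((u, v) \in H) == c)]
  | i <- iota 0 n].
have props x : x \in X -> (forall u v, u < v -> v < n -> vx x u < vx x v) /\
                         (forall i, i < n -> vx x i < N) /\ Dec (Fm x) = x.1.
  move=> xX; have := genF_good b2 (leqnn n) xX.
  case=> -[sw sL] bnd cons nst st.
  pose w := nth false x.1; pose bl := fun i => (nth (0,0) x.2 i).1;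
  pose pl := fun i => (nth (0,0) x.2 i).2.
  have cons' j : j.+1 < n -> if w j.+1 then is_true (bl j < bl j.+1) else bl j = bl j.+1 /\ pl j < pl j.+1.
    exact: cons.
  have nst' i : i < n -> ~~ w i -> exists s e, [/\ s < i <= e, e < n, bl s = bl e, pl s = 0 & pl e = b.-1].
    exact: nst.
  clear cons nst.
  have bln u : u < n -> bl u < n.
    by move=> un; case: (bnd u un) => /andP[_ hh] _; rewrite add0n in hh.
  have plb u : u < n -> pl u < b by move=> un; case: (bnd u un).
  have blmono : forall u v, u <= v -> v < n -> bl u <= bl v.
    apply: nondec_succ => j jn; move: (cons' j jn).
    by case: (w j.+1) => [/ltnW|[-> _]].
  have blstrict u i v : u < i -> i <= v -> v < n -> w i -> bl u < bl v.
    move=> ui iv vn wi.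
    have := cons' i.-1; rewrite (_ : i.-1.+1 = i); last lia.
    move=> /(_ (leq_ltn_trans iv vn)); rewrite wi => hi.
    apply: leq_ltn_trans (blmono u i.-1 _ _) (leq_trans hi (blmono i v iv vn)); lia.
  have vinc : forall u v, u < v -> v < n -> vx x u < vx x v.
    apply: inc_succ => j jn; move: (cons' j jn).
    change (vx x j) with (h (bl j) (pl j)); change (vx x j.+1) with (h (bl j.+1) (pl j.+1)).
    case: (w j.+1) => [hb|[he hp]].
    - by apply: C3 => //; [apply: bln | apply: plb; lia | apply: plb].
    - by rewrite -he; apply: C2 => //; [apply: bln; lia | apply: plb].
  split => //; split; first by move=> i iN; apply: C1; [apply: bln | apply: plb].
  apply: (@eq_from_nth _ false); first by rewrite size_map size_iota sw.
  move=> i; rewrite size_map size_iota => iN.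
  rewrite (nth_map 0) ?size_iota // nth_iota // add0n.
  rewrite -/(w i); case wi: (w i).
  - apply/forallP => u; apply/forallP => v; apply/implyP => /andP[ui iv].
    rewrite Ind_mem (leq_trans ui iv) /=; apply/eqP.
    apply: C4; [exact: (blstrict u i v) | exact: bln | exact: plb | exact: plb].
  - have [s [e [/andP[si ie] en he ps pe]]] := nst' i iN (negbT wi).
    apply/negbTE/negP => /forallP /(_ (Ordinal (ltn_trans si iN))) /forallP
       /(_ (Ordinal en)) /implyP /(_ _); rewrite /= si ie => /(_ isT).
    have se : s < e by lia.
    rewrite Ind_mem /= se /=.
    change (adjn G (h (bl s) (pl s)) (h (bl e) (pl e)) == c -> False).
    rewrite ps pe he.
    by move: (C5 (bl e) (bln e en)) => /negbTE ->.
have uX : uniq (map Fm X).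
  apply: (@map_uniq _ _ Dec); rewrite -map_comp.
  have -> : map (Dec \o Fm) X = map fst X.
    by apply/eq_in_map => x xX; case: (props x xX) => _ [_ e]; exact: e.
  exact: genF_uniq.
have -> : F n b = size (map Fm X) by rewrite size_map genF_size //; lia.
rewrite cardE; apply: uniq_leq_size => // G' /mapP [x xX ->].
rewrite mem_enum; case: (props x xX) => vinc [vN _].
exact: Emb.
Qed.

Definition Mb b := 2 * b.

Definition Struct N (g : nat -> nat) b k :=
  (forall u v, u < v -> v < k * Mb b -> g u < g v) /\ (forall u, u < k * Mb b -> g u < N).

Definition PureR N (G : ograph N) (g : nat -> nat) b w A len :=
  forall u u', A * Mb b <= u -> u < (A + len) * Mb b -> A * Mb b <= u' -> u' < (A + len) * Mb b ->
    adjn G (g w) (g u) = adjn G (g w) (g u').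

Lemma lo_mono (A m M i j : nat) : i <= j -> (A + i * m) * M <= (A + j * m) * M.
Proof. by move=> ij; rewrite leq_mul2r leq_add2l leq_mul2r ij !orbT. Qed.

Lemma mul_le (x y M : nat) : x <= y -> x * M <= y * M.
Proof. by move=> xy; rewrite leq_mul2r xy orbT. Qed.

Lemma Shrink1 N (G : ograph N) g b k n w A m : Struct N g b k -> 1 < n -> 0 < m ->
  w < A * Mb b -> A + n.-1 * m <= k ->
  Conf G n \/ exists A', [/\ A <= A', A' + m <= A + n.-1 * m & PureR G g b w A' m].
Proof.
move=> [ginc gN] n1 m0 wA Ak.
pose M := Mb b.
pose lo i := (A + i * m) * M.
have kM : (A + n.-1 * m) * M <= k * M by apply: mul_le.
case: (classic (exists i, i < n.-1 /\ PureR G g b w (A + i * m) m)) => [[i [il pr]]|nop].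
  right; exists (A + i * m); split => //; first lia.
  by rewrite -addnA -mulSnr leq_add2l leq_mul2r il orbT.
left.
have H i : exists uu : nat * nat, i < n.-1 ->
   [/\ lo i <= uu.1 < lo i.+1, lo i <= uu.2 < lo i.+1 &
       adjn G (g w) (g uu.1) != adjn G (g w) (g uu.2)].
  case: (ltnP i n.-1) => il; last by exists (0, 0) => h; exfalso; lia.
  case: (classic (exists uu : nat * nat, [/\ lo i <= uu.1 < lo i.+1, lo i <= uu.2 < lo i.+1 &
       adjn G (g w) (g uu.1) != adjn G (g w) (g uu.2)])) => [[uu huu]|nex].
    by exists uu.
  exfalso; apply: nop; exists i; split => // u u' h1 h2 h3 h4.
  apply: NNPP => ne; apply: nex; exists (u, u'); split => /=; [apply/andP; split => //| apply/andP; split => // | by apply/eqP].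
  - by move: h2; rewrite /lo mulSnr addnA.
  - by move: h4; rewrite /lo mulSnr addnA.
have [U HU] := fchoice H.
have loA i : A * M <= lo i by rewrite /lo mul_le // leq_addr.
have lok i : i < n.-1 -> lo i.+1 <= k * M.
  by move=> il; apply: leq_trans kM; apply: lo_mono.
exists (fun i => if i is i'.+1 then g (U i').1 else g w).
exists (fun i => if i is i'.+1 then g (U i').2 else g w).
exists 0; split; first lia. split; [|split; [|split => //]].
- move=> [|i] iN.
  + split; apply: gN; apply: leq_trans wA _; apply: leq_trans (loA 0) (leq_trans (lo_mono _ _ _ (leq0n n.-1)) kM).
  + have ii : i < n.-1 by lia.
    have [/andP[_ a1] /andP[_ a2] _] := HU i ii.
    by split; apply: gN; apply: leq_trans (lok i _); lia.
- move=> [|i] [|j] // ij jn.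
  + have jj : j < n.-1 by lia.
    have [/andP[a1 a2] /andP[b1 b2] _] := HU j jj.
    have hw := leq_trans wA (loA j).
    have k1 : (U j).1 < k * M by apply: leq_trans (lok j _); lia.
    have k2 : (U j).2 < k * M by apply: leq_trans (lok j _); lia.
    have := ginc _ _ (leq_trans hw a1) k1; have := ginc _ _ (leq_trans hw b1) k2; lia.
  + have ii : i < n.-1 by lia.
    have [/andP[a1 a2] /andP[b1 b2] _] := HU i ii.
    have jj : j < n.-1 by lia.
    have [/andP[c1 c2] /andP[d1 d2] _] := HU j jj.
    have lij : lo i.+1 <= lo j by apply: lo_mono.
    have k1 : (U j).1 < k * M by apply: leq_trans (lok j _); lia.
    have k2 : (U j).2 < k * M by apply: leq_trans (lok j _); lia.
    have := ginc (U i).1 (U j).1 _ k1; have := ginc (U i).1 (U j).2 _ k2;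
    have := ginc (U i).2 (U j).1 _ k1; have := ginc (U i).2 (U j).2 _ k2; lia.
- move=> [|i] // iN _.
  have ii : i < n.-1 by lia.
    have [_ _ ne] := HU i ii.
  by rewrite adjn_sym [adjn G (g (U i).2) _]adjn_sym.
Qed.

Lemma PureR_sub N (G : ograph N) g b w A len A' len' :
  A <= A' -> A' + len' <= A + len -> PureR G g b w A len -> PureR G g b w A' len'.
Proof.
move=> h1 h2 pr u u' a1 a2 a3 a4.
have e1 : A * Mb b <= A' * Mb b by apply: mul_le.
have e2 : (A' + len') * Mb b <= (A + len) * Mb b by apply: mul_le.
apply: pr; lia.
Qed.

Lemma ShrinkN N (G : ograph N) g b k n base q : Struct N g b k -> 1 < n ->
  forall A m, 0 < m -> base + q <= A * Mb b -> A + n.-1 ^ q * m <= k ->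
  Conf G n \/ exists A', [/\ A <= A', A' + m <= A + n.-1 ^ q * m &
                          forall j, j < q -> PureR G g b (base + j) A' m].
Proof.
move=> S n1; elim: q => [|q IH] A m m0 bA Ak.
  by right; exists A; split => //; rewrite expn0 mul1n.
have m'0 : 0 < n.-1 ^ q * m by rewrite muln_gt0 expn_gt0 m0 andbT; apply/orP; left; lia.
have e : n.-1 ^ q.+1 * m = n.-1 * (n.-1 ^ q * m) by rewrite expnS mulnA.
have f1 : base + q < A * Mb b by lia.
have f2 : A + n.-1 * (n.-1 ^ q * m) <= k by rewrite -e.
case: (Shrink1 G S n1 m'0 f1 f2).
- by left.
move=> [A1 [h1 h2 pr1]].
have A1M : A * Mb b <= A1 * Mb b by apply: mul_le.
have f3 : base + q <= A1 * Mb b by lia.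
have f4 : A1 + n.-1 ^ q * m <= k by lia.
case: (IH A1 m m0 f3 f4); first by left.
move=> [A' [h3 h4 pr]].
right; exists A'; split; [lia | lia |].
move=> j; rewrite ltnS leq_eqVlt => /orP[/eqP ->|jq]; last exact: pr.
by apply: PureR_sub pr1 => //; lia.
Qed.

Definition Len c t := iter t (fun x => (c * x).+1) 1.

Lemma Len_pos c t : 0 < Len c t. Proof. by case: t. Qed.

Lemma Greedy N (G : ograph N) g b k n t : Struct N g b k -> 1 < n ->
  forall L len, Len (n.-1 ^ Mb b) t <= len -> L + len <= k ->
  Conf G n \/ exists (J : nat -> nat) Lf,
   [/\ (forall i, i < t -> L <= J i /\ J i < Lf),
       (forall i, i.+1 < t -> J i < J i.+1),
       L <= Lf /\ Lf < L + len &
       (forall i i' u w, i < i' -> i' < t -> J i * Mb b <= u < (J i).+1 * Mb b ->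
          J i' * Mb b <= w < (J i').+1 * Mb b ->
          adjn G (g u) (g w) = adjn G (g u) (g (Lf * Mb b)))].
Proof.
move=> S n1; elim: t => [|t IH] L len hl Lk.
  right; exists (fun _ => 0), L; split => //; rewrite /Len /= in hl; lia.
set c := n.-1 ^ Mb b in hl IH *.
have hl' : (c * Len c t).+1 <= len by [].
have Lp := Len_pos c t.
have f1 : L * Mb b + Mb b <= L.+1 * Mb b by rewrite mulSn addnC.
have f2 : L.+1 + n.-1 ^ Mb b * Len c t <= k by lia.
case: (ShrinkN G S n1 Lp f1 f2).
- by left.
move=> [A' [h1 h2 pr]].
case: (IH A' (Len c t) (leqnn _) _); first lia.
- by left.
move=> [J' [Lf [hJ1 hJ2 [hL1 hL2] hJ3]]].
right; exists (fun i => if i is i'.+1 then J' i' else L), Lf; split.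
- move=> [|i] it; first by split; lia.
  by have := hJ1 i it; lia.
- move=> [|i] it; first by have := hJ1 0 it; lia.
  exact: hJ2.
- by split; lia.
- move=> [|i] [|i'] // u w ii' i't hu hw.
  + have [hA hB] := hJ1 i' i't.
    have e1 : A' * Mb b <= J' i' * Mb b by apply: mul_le.
    have e2 : (J' i').+1 * Mb b <= (A' + Len c t) * Mb b by apply: mul_le; lia.
    have e3 : A' * Mb b <= Lf * Mb b by apply: mul_le; lia.
    have e4 : Lf.+1 * Mb b <= (A' + Len c t) * Mb b by apply: mul_le; lia.
    have M0 : 0 < Mb b by move: hu; case: (Mb b) => [|//]; rewrite !muln0.
    have e5 : Lf * Mb b < Lf.+1 * Mb b by rewrite mulSn; lia.
    have jlt : u - L * Mb b < Mb b by move: hu; rewrite mulSn; lia.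
    have H := pr _ jlt.
    have E : L * Mb b + (u - L * Mb b) = u by lia.
    rewrite /PureR E in H.
    by apply: H; lia.
  + exact: (hJ3 i i' u w ii' i't hu hw).
Qed.

Lemma extract (P : pred nat) s m : m <= count P (iota 0 s) ->
  exists f : nat -> nat, (forall i, i < m -> f i < s /\ P (f i)) /\
                         (forall i, i.+1 < m -> f i < f i.+1).
Proof.
elim: s m => [|s IH] m.
  by rewrite /= leqn0 => /eqP ->; exists id.
rewrite -addn1 iotaD count_cat /= addn0 add0n.
case Ps: (P s) => /= hm.
- case: m hm => [|m] hm; first by exists id.
  have hm' : m <= count P (iota 0 s) by lia.
  have [f [hf1 hf2]] := IH m hm'.
  exists (fun i => if i == m then s else f i); split.
  + move=> i im; case: eqP => [_|ne]; first by rewrite Ps; split => //; lia.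
    have im' : i < m by lia.
    by have [h1 h2] := hf1 i im'; split => //; lia.
  + move=> i im; case: eqP => [e|ne]; first lia.
    case: eqP => [e|ne'].
    * have im' : i < m by lia.
      by have [] := hf1 i im'; lia.
    * by apply: hf2; lia.
- have hm' : m <= count P (iota 0 s) by lia.
  have [f [hf1 hf2]] := IH m hm'.
  by exists f; split => // i im; have [] := hf1 i im; split => //; lia.
Qed.

Lemma count_split (T : Type) (a c : pred T) s :
  count (fun x => a x && c x) s + count (fun x => a x && ~~ c x) s = count a s.
Proof. by elim: s => //= x s IH; case: (a x); case: (c x) => /=; lia. Qed.

Lemma Main (P : oproperty) N (G : ograph N) g b k n :
  hereditary P -> wf_ograph G -> P N G -> Struct N g b k -> 2 <= b -> 1 < n ->
  (forall j, j < k -> adjn G (g (j * Mb b)) (g (j * Mb b + b.-1)) =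
        ~~ adjn G (g (j * Mb b + b)) (g (j * Mb b + b + b.-1))) ->
  Len (n.-1 ^ Mb b) (3 * n) <= k ->
  F n b <= #|target P n|.
Proof.
move=> hP wf PG S b2 n1 alt hk.
have [ginc gN] := S.
have M0 : 0 < Mb b by rewrite /Mb; lia.
have FP : F n b <= 2 ^ n.-1 by case: n n1 {hk} => // n' _; apply: F_pow.
have kk : 0 + k <= k by [].
case: (Greedy G S n1 hk kk) => [conf|].
  exact: leq_trans FP (L1 hP wf PG conf).
move=> [J [Lf [hJ1 hJ2 [_ hLf] hJ3]]].
have Jinc : forall i i', i < i' -> i' < 3 * n -> J i < J i' := inc_succ hJ2.
pose phi u := adjn G (g u) (g (Lf * Mb b)).
pose mixed i := ~~ all (fun u => phi u == phi (J i * Mb b)) (iota (J i * Mb b) (Mb b)).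
have blk_le j j' : j < j' -> j * Mb b + Mb b <= j' * Mb b.
  by move=> jj; rewrite -mulSnr; apply: mul_le.
have Jk i : i < 3 * n -> J i * Mb b + Mb b <= k * Mb b.
  by move=> it; apply: blk_le; have := hJ1 i it; lia.
have Lfk : Lf * Mb b < k * Mb b.
  by rewrite ltn_mul2r M0 /=; lia.
case: (leqP n.-1 (count mixed (iota 0 (3 * n)))) => hc.
- have [f [hf1 hf2]] := extract hc.
  have finc : forall r r', r < r' -> r' < n.-1 -> f r < f r' := inc_succ hf2.
  have hU r : exists u, r < n.-1 ->
      [/\ J (f r) * Mb b <= u, u < J (f r) * Mb b + Mb b & phi u != phi (J (f r) * Mb b)].
    case: (ltnP r n.-1) => rl; last by exists 0.
    have [fr mx] := hf1 r rl.
    move: mx; rewrite /mixed => /allPn [u uin ne]; exists u => _.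
    by move: uin; rewrite mem_iota => /andP[u1 u2]; split.
  have [U HU] := fchoice hU.
  apply: leq_trans FP (L1 hP wf PG _).
  exists (fun r => if r < n.-1 then g (J (f r) * Mb b) else g (Lf * Mb b)).
  exists (fun r => if r < n.-1 then g (U r) else g (Lf * Mb b)).
  exists n.-1; split; first lia.
  split; [|split; [|split]].
  + move=> r rn; case: ifP => rl; last by split; apply: gN.
    have [fr _] := hf1 r rl; have [u1 u2 _] := HU r rl; have := Jk _ fr.
    by split; apply: gN; lia.
  + move=> r r' rr' r'n; have rl : r < n.-1 by lia.
    rewrite rl; have [fr _] := hf1 r rl; have [u1 u2 _] := HU r rl.
    case: ifP => r'l.
    * have [fr' _] := hf1 r' r'l; have [u1' u2' _] := HU r' r'l.
      have := blk_le _ _ (Jinc _ _ (finc _ _ rr' r'l) fr'); have := Jk _ fr'.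
      move=> h1 h2.
      have := ginc (J (f r) * Mb b) (J (f r') * Mb b); have := ginc (J (f r) * Mb b) (U r');
      have := ginc (U r) (J (f r') * Mb b); have := ginc (U r) (U r'); lia.
    * have := hJ1 _ fr => -[_ hl]; have := blk_le _ _ hl => h1.
      have := ginc (J (f r) * Mb b) (Lf * Mb b); have := ginc (U r) (Lf * Mb b); lia.
  + by rewrite ltnn.
  + move=> r rn rne; have rl : r < n.-1 by lia.
    rewrite rl ltnn; have [_ _ ne] := HU r rl.
    by rewrite eq_sym.
- have hcn : n <= count (fun i => ~~ mixed i && phi (J i * Mb b)) (iota 0 (3 * n)) \/
             n <= count (fun i => ~~ mixed i && ~~ phi (J i * Mb b)) (iota 0 (3 * n)).
    have := count_split (fun i => ~~ mixed i) (fun i => phi (J i * Mb b)) (iota 0 (3 * n)).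
    have := count_predC mixed (iota 0 (3 * n)); rewrite size_iota => h1 h2.
    have e : count (fun i => ~~ mixed i) (iota 0 (3 * n)) = count (predC mixed) (iota 0 (3 * n)) by [].
    lia.
  have [cc hcc] : exists cc : bool,
      n <= count (fun i => ~~ mixed i && (phi (J i * Mb b) == cc)) (iota 0 (3 * n)).
    case: hcn => h; [exists true | exists false]; apply: leq_trans h _;
    by rewrite leq_eqVlt; apply/orP; left; apply/eqP; apply: eq_count => i;
       case: (phi _).
  have [f [hf1 hf2]] := extract hcc.
  have finc : forall r r', r < r' -> r' < n -> f r < f r' := inc_succ hf2.
  pose sel r := adjn G (g (J (f r) * Mb b)) (g (J (f r) * Mb b + b.-1)) == cc.
  pose h r p := g (J (f r) * Mb b + (if sel r then b else 0) + p).
  have selb r p : p < b -> (if sel r then b else 0) + p < Mb b.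
    by move=> pb; case: (sel r); rewrite /Mb; lia.
  have nonmix r u : r < n -> J (f r) * Mb b <= u -> u < J (f r) * Mb b + Mb b -> phi u = cc.
    move=> rn u1 u2; have [fr /andP[nm /eqP <-]] := hf1 r rn.
    move: nm; rewrite /mixed negbK => /allP /(_ u); rewrite mem_iota u1 u2 => /(_ isT) /eqP.
    by [].
  apply: (L2 (h := h) (c := cc) hP wf PG b2).
  + move=> r p rn pb; have [fr _] := hf1 r rn; have := Jk _ fr; have := selb r p pb.
    by move=> *; apply: gN; lia.
  + move=> r p p' rn pp' p'b; have [fr _] := hf1 r rn; have := Jk _ fr; have := selb r p' p'b.
    move=> *; apply: ginc; lia.
  + move=> r r' p p' rr' r'n pb p'b.
    have [fr _] := hf1 r (ltn_trans rr' r'n); have [fr' _] := hf1 r' r'n.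
    have := blk_le _ _ (Jinc _ _ (finc _ _ rr' r'n) fr'); have := Jk _ fr'.
    have := selb r p pb; have := selb r' p' p'b.
    move=> *; apply: ginc; lia.
  + move=> r r' p p' rr' r'n pb p'b.
    have [fr _] := hf1 r (ltn_trans rr' r'n); have [fr' _] := hf1 r' r'n.
    have := selb r p pb; have := selb r' p' p'b => s1 s2.
    rewrite /h (hJ3 (f r) (f r')); first last.
    * by apply/andP; split; rewrite ?mulSn; lia.
    * by apply/andP; split; rewrite ?mulSn; lia.
    * exact: fr'.
    * exact: finc.
    by apply: (nonmix r) => //; [lia | lia | lia].
  + move=> r rn; have [fr _] := hf1 r rn.
    have Jlt : J (f r) < k by have := hJ1 _ fr; lia.
    rewrite /h; case sr: (sel r); move: sr; rewrite /sel.
    * move=> /eqP e; rewrite addn0; rewrite (alt _ Jlt) in e.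
      by rewrite -e; case: (adjn _ _ _).
    * by rewrite !addn0 => /negbT.
Qed.

Theorem lemma6 (l : nat) (P : oproperty) :
  hereditary P ->
  (forall K : nat, exists k : nat, (K <= k)%N /\
     exists (n : nat) (G : ograph n),
       wf_ograph G /\ P n G /\ type3_structure G k l) ->
  forall n : nat, (F n l.+1 <= #|[set G : ograph n | wf_ograph G && P n G]|)%N.
Proof.
move=> hP hyp n.
change #|[set G : ograph n | wf_ograph G && P n G]| with #|target P n|.
pose b := blk l.
have b2 : 2 <= b by rewrite /b /blk leq_maxl.
have Fb : F n l.+1 <= F n b.
  rewrite /b /blk; case: (l) => [|l'].
  - by rewrite F1; apply: F_pos.
  - by rewrite (_ : maxn 2 l'.+2 = l'.+2) //; lia.
apply: leq_trans Fb _.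
case: (leqP n 1) => n1.
- have [k [k1 [N [G [wf [PG [g [ginc [gN _]]]]]]]]] := hyp 1.
  have N0 : 0 < N by have := gN 0; rewrite /blk; lia.
  have hF : F n b <= 1.
    by case: n n1 => [|[|]] // _; rewrite F_rec (_ : minn b 1 = 1) //; lia.
  have h0 : 0 < #|target P n|.
    rewrite card_gt0; apply/set0Pn.
    exists (Ind G n (fun _ => 0)); apply: Emb => //; try (by move=> *; lia).
  exact: leq_trans hF h0.
- pose K := Len (n.-1 ^ Mb b) (3 * n).
  have [k [Kk [N [G [wf [PG [g [ginc [gN alt]]]]]]]]] := hyp K.
  have eM : 2 * k * blk l = k * Mb b by rewrite /Mb /b mulnCA mulnA.
  have S : Struct N g b k.
    split; last by move=> u; rewrite -eM; apply: gN.
    move=> u v uv; rewrite -eM; apply: inc_succ uv => j.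
    exact: ginc.
  apply: (Main hP wf PG S b2 n1 _ Kk).
  move=> j jk; have jk' : (2 * j).+1 < 2 * k by lia.
  have := alt (2 * j) jk'.
  have e1 : 2 * j * blk l = j * Mb b by rewrite /Mb /b mulnCA mulnA.
  have e2 : (2 * j).+1 * blk l = j * Mb b + b by rewrite mulSnr e1.
  rewrite e1 e2.
  have -> : j * Mb b + b - 1 = j * Mb b + b.-1 by lia.
  by have -> : j * Mb b + b + b - 1 = j * Mb b + b + b.-1 by lia.
Qed.
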